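(* Consider a downlink THz-NOMA system in which a base station serves $K=2$ legacy primary users on two fixed (pre-configured) beams $\mathbf{f}_1,\mathbf{f}_2$, both primary users using the same transmit power $\rho^P>0$, and serves $M=1$ secondary user on these beams with total power budget $P^{\max}>0$. Let $h_k>0$ denote the secondary user's effective channel gain on beam $\mathbf{f}_k$, $k\in\{1,2\}$, and let $\rho_k\ge 0$ denote the secondary user's power on beam $\mathbf{f}_k$. Assume that the primary users' target data rates tend to $0$ (so that the primary users' quality-of-service and the secondary user's SIC-decodability constraints become inactive) and that the noise power $\sigma^2\to 0$ (high SNR). In this regime the joint beam and power allocation problem is $$\max_{\rho_1,\rho_2\ge 0,\ \rho_1+\rho_2\le P^{\max}} \; F(\rho_1,\rho_2)=\log_2\!\Big(1+\frac{h_1\rho_1}{h_2\rho_2+h_2\rho^P}\Big)+\log_2\!\Big(1+\frac{h_2\rho_2}{h_1\rho_1+h_1\rho^P}\Big),$$ and the greedy scheduling problem (use a single beam $\mathbf{f}_k$ with all other beams idle) is $\max_{k\in\{1,2\}}\max_{0\le \rho_k\le P^{\max}}\log_2\!\big(1+\frac{h_k\rho_k}{h_{k'}\rho^P}\big)$ with $k'\neq k$, whose solution is $\rho_{k^*}=P^{\max}$ on the beam $k^*=\arg\max_{k}h_k$ and $0$ on the other beam. Then the optimal solution of the joint problem is the same as that of the greedy scheduling problem: $\rho_{k^*}=P^{\max}$, $\rho_{k'}=0$ (with $k^*=\arg\max_k h_k$, $k'\ne k^*$) maximizes $F$ over the feasible set.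
   Context: Effective gains: $h_k=\frac{|a^S|^2}{\mathrm{PL}^S}|\mathbf{a}^H(\theta^S)\mathbf{f}_k|^2$, where $a^S$ is the secondary user's fading coefficient, $\mathrm{PL}^S$ its path loss, $\theta^S$ its angle of departure, and $\mathbf{a}(\theta)=[1,e^{-j2\pi f_c d\sin\theta/c},\dots,e^{-j2(N-1)\pi f_c d\sin\theta/c}]^T$ the array steering vector. The secondary user's signal on beam $k$ suffers interference from the primary signal and the secondary signal on the other beam $k'$ (inter-beam interference $h_{k'}(\rho^P+\rho_{k'})$); primary users treat secondary signals as noise and the secondary user decodes the primary signal on its beam first via successive interference cancellation. Logarithms are base 2. *)

(* Defs.v *)
From Stdlib Require Import Reals.
Open Scope R_scope.

Definition log2 (x : R) : R := ln x / ln 2.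

Definition Fjoint (h1 h2 rhoP rho1 rho2 : R) : R :=
  log2 (1 + h1 * rho1 / (h2 * rho2 + h2 * rhoP))
  + log2 (1 + h2 * rho2 / (h1 * rho1 + h1 * rhoP)).

Definition feasible (Pmax rho1 rho2 : R) : Prop :=
  0 <= rho1 /\ 0 <= rho2 /\ rho1 + rho2 <= Pmax.

(* Main.v *)
Require Import Defs.
From Stdlib Require Import Reals Lra Psatz.
Open Scope R_scope.
Lemma poly (h1 h2 p x y P : R) : 0 < h2 -> h2 <= h1 -> 0 < p -> 0 <= x -> 0 <= y -> x + y <= P ->
 (h1*x+h2*y+h2*p)*(h1*x+h2*y+h1*p)*p <= h1*(h1*P+h2*p)*(x+p)*(y+p).
Proof. intros.
 assert (A: (h1*x+h2*y+h2*p) <= (h1*P+h2*p)) by nra.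
 assert (0 <= h1*(x*y)) by (apply Rmult_le_pos; nra).
 assert (0 <= (h1-h2)*(y*p)) by (apply Rmult_le_pos; nra).
 assert (B: (h1*x+h2*y+h1*p)*p <= h1*(x+p)*(y+p)) by nra.
 assert (0 <= h1*x+h2*y+h2*p) by nra.
 assert (0 <= (h1*x+h2*y+h1*p)*p) by nra.
 replace ((h1*x+h2*y+h2*p)*(h1*x+h2*y+h1*p)*p) with ((h1*x+h2*y+h2*p)*((h1*x+h2*y+h1*p)*p)) by ring.
 replace (h1*(h1*P+h2*p)*(x+p)*(y+p)) with ((h1*P+h2*p)*(h1*(x+p)*(y+p))) by ring.
 apply Rmult_le_compat; auto. Qed.

Lemma half (h1 h2 rhoP Pmax x y : R) : 0 < h2 -> h2 <= h1 -> 0 < rhoP ->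
  feasible Pmax x y -> Fjoint h1 h2 rhoP x y <= Fjoint h1 h2 rhoP Pmax 0.
Proof.
  intros H2 H12 Hp [Hx [Hy Hs]].
  assert (H1 : 0 < h1) by lra.
  unfold Fjoint, log2.
  replace (1 + h2 * 0 / (h1 * Pmax + h1 * rhoP)) with 1 by (field; nra).
  rewrite ln_1.
  assert (Hl2 : 0 < ln 2) by (rewrite <- ln_1; apply ln_increasing; lra).
  set (a := 1 + h1 * x / (h2 * y + h2 * rhoP)).
  set (b := 1 + h2 * y / (h1 * x + h1 * rhoP)).
  set (c := 1 + h1 * Pmax / (h2 * 0 + h2 * rhoP)).
  assert (Ha : a = (h1*x+h2*y+h2*rhoP)/(h2*(y+rhoP))) by (unfold a; field; nra).
  assert (Hb : b = (h1*x+h2*y+h1*rhoP)/(h1*(x+rhoP))) by (unfold b; field; nra).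
  assert (Hc : c - a*b = (h1*(h1*Pmax+h2*rhoP)*(x+rhoP)*(y+rhoP) - (h1*x+h2*y+h2*rhoP)*(h1*x+h2*y+h1*rhoP)*rhoP)
     / (h1*h2*rhoP*(x+rhoP)*(y+rhoP))) by (rewrite Ha, Hb; unfold c; field; repeat split; nra).
  assert (Hpa : 0 < a) by (rewrite Ha; apply Rdiv_lt_0_compat; nra).
  assert (Hpb : 0 < b) by (rewrite Hb; apply Rdiv_lt_0_compat; nra).
  assert (Hab : a * b <= c).
  { assert (0 <= c - a*b); [|lra]. rewrite Hc. unfold Rdiv; apply Rmult_le_pos; [|left; apply Rinv_0_lt_compat].
    - pose proof (poly h1 h2 rhoP x y Pmax H2 H12 Hp Hx Hy Hs). lra.
    - apply Rmult_lt_0_compat; [|lra]. apply Rmult_lt_0_compat; [|lra].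
      repeat apply Rmult_lt_0_compat; lra. }
  replace (0 / ln 2) with 0 by (field; lra). rewrite Rplus_0_r, <- Rdiv_plus_distr, <- ln_mult by assumption.
  apply Rmult_le_compat_r; [left; apply Rinv_0_lt_compat; lra|].
  destruct Hab as [Hab|Hab]; [left; apply ln_increasing; nra | rewrite Hab; lra].
Qed.

Lemma Fsym h1 h2 p x y : Fjoint h1 h2 p x y = Fjoint h2 h1 p y x.
Proof. unfold Fjoint; ring. Qed.

Theorem lemma1 (h1 h2 rhoP Pmax : R) (hh1 : 0 < h1) (hh2 : 0 < h2)
  (hP : 0 < rhoP) (hPmax : 0 < Pmax) :
  (h2 <= h1 ->
     feasible Pmax Pmax 0 /\
     forall rho1 rho2, feasible Pmax rho1 rho2 ->
       Fjoint h1 h2 rhoP rho1 rho2 <= Fjoint h1 h2 rhoP Pmax 0) /\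
  (h1 <= h2 ->
     feasible Pmax 0 Pmax /\
     forall rho1 rho2, feasible Pmax rho1 rho2 ->
       Fjoint h1 h2 rhoP rho1 rho2 <= Fjoint h1 h2 rhoP 0 Pmax).
Proof.
  split; intro H; split.
  - unfold feasible; lra.
  - intros; apply half; auto.
  - unfold feasible; lra.
  - intros r1 r2 [A [B C]]. rewrite (Fsym h1 h2 rhoP r1 r2), (Fsym h1 h2 rhoP 0 Pmax).
    apply half; auto. unfold feasible; lra.
Qed.
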